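(* Let $(X,T)$ be a topological dynamical system and let $K$ be a compact subset of $X$. Then $K$ has bounded topological complexity with respect to $\{\hat d_n\}$ if and only if $K$ is equicontinuous in the mean.
   Context: A t.d.s. $(X,T)$ consists of a compact metric space $(X,d)$ and a continuous map $T\colon X\to X$. For $n\in\mathbb{N}$ and $x,y\in X$ let $\bar d_n(x,y)=\frac1n\sum_{i=0}^{n-1}d(T^ix,T^iy)$ and $\hat d_n(x,y)=\max\{\bar d_k(x,y)\colon 1\le k\le n\}$; $B_{\hat d_n}(x,\varepsilon)=\{y\colon \hat d_n(x,y)<\varepsilon\}$. For $K\subset X$, $\widehat{\mathrm{span}}_K(n,\varepsilon)=\min\{\#(F)\colon F\subset K,\ K\subset\bigcup_{x\in F}B_{\hat d_n}(x,\varepsilon)\}$. $K$ has bounded topological complexity with respect to $\{\hat d_n\}$ if for every $\varepsilon>0$ there is a positive integer $C$ with $\widehat{\mathrm{span}}_K(n,\varepsilon)\le C$ for all $n\ge1$. $K$ is equicontinuous in the mean if for every $\varepsilon>0$ there is $\delta>0$ such that $\hat d_n(x,y)<\varepsilon$ for all $n\ge1$ and all $x,y\in K$ with $d(x,y)<\delta$. *)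

(* Defs.v *)
From Stdlib Require Import Reals Lra Lia List.
Import ListNotations.
Open Scope R_scope.

Record metric (X : Type) := Metric {
  dist : X -> X -> R;
  dist_nonneg : forall x y, 0 <= dist x y;
  dist_refl : forall x, dist x x = 0;
  dist_eq : forall x y, dist x y = 0 -> x = y;
  dist_sym : forall x y, dist x y = dist y x;
  dist_tri : forall x y z, dist x z <= dist x y + dist y z
}.
Arguments dist {X} _ _ _.

Section MetricNotions.
Context {X : Type} (m : metric X).

Definition open_set (U : X -> Prop) : Prop :=
  forall x, U x -> exists r, 0 < r /\ forall y, dist m x y < r -> U y.

Definition compact_set (K : X -> Prop) : Prop :=
  forall (I : Type) (U : I -> X -> Prop),
    (forall i, open_set (U i)) ->
    (forall x, K x -> exists i, U i x) ->
    exists l : list I, forall x, K x -> exists i, In i l /\ U i x.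

Definition compact_space : Prop := compact_set (fun _ => True).

Definition continuous_map (T : X -> X) : Prop :=
  forall x eps, 0 < eps -> exists delta, 0 < delta /\
    forall y, dist m x y < delta -> dist m (T x) (T y) < eps.

Definition iterT (T : X -> X) (i : nat) (x : X) : X := Nat.iter i T x.

Definition dbar (T : X -> X) (n : nat) (x y : X) : R :=
  / INR n * fold_right Rplus 0 (map (fun i => dist m (iterT T i x) (iterT T i y)) (seq 0 n)).

(* \hat d_n(x,y) = max { \bar d_k(x,y) : 1 <= k <= n }  (all values are >= 0,
   so folding Rmax with initial value 0 gives exactly this maximum for n >= 1). *)
Definition dhat (T : X -> X) (n : nat) (x y : X) : R :=
  fold_right Rmax 0 (map (fun k => dbar T k x y) (seq 1 n)).

(* F (a finite set, as a duplicate-free list) is a subset of K whose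
   \hat d_n-balls of radius eps cover K. *)
Definition hat_spanning (T : X -> X) (K : X -> Prop) (n : nat) (eps : R)
    (F : list X) : Prop :=
  NoDup F /\ (forall x, In x F -> K x) /\
  (forall y, K y -> exists x, In x F /\ dhat T n x y < eps).

Definition hat_span_is (T : X -> X) (K : X -> Prop) (n : nat) (eps : R)
    (s : nat) : Prop :=
  (exists F, hat_spanning T K n eps F /\ length F = s) /\
  (forall F, hat_spanning T K n eps F -> (s <= length F)%nat).

Definition bounded_complexity (T : X -> X) (K : X -> Prop) : Prop :=
  forall eps, 0 < eps -> exists C : nat, (0 < C)%nat /\
    forall n, (1 <= n)%nat -> exists s, hat_span_is T K n eps s /\ (s <= C)%nat.

Definition equicontinuous_in_mean (T : X -> X) (K : X -> Prop) : Prop :=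
  forall eps, 0 < eps -> exists delta, 0 < delta /\
    forall n x y, (1 <= n)%nat -> K x -> K y -> dist m x y < delta ->
      dhat T n x y < eps.

End MetricNotions.

(* Main.v *)
Require Import Defs.
From Stdlib Require Import Reals.
From Stdlib Require Import Lra Lia List Classical ClassicalEpsilon.
Import ListNotations.
Open Scope R_scope.

Lemma fmax_ge : forall l a, In a l -> a <= fold_right Rmax 0 l.
Proof.
  induction l; simpl; intros b H; [contradiction|].
  destruct H; [subst; apply Rmax_l|].
  eapply Rle_trans; [apply IHl; auto | apply Rmax_r].
Qed.

Lemma fmax_nonneg : forall l, 0 <= fold_right Rmax 0 l.
Proof. induction l; simpl; [lra|]. eapply Rle_trans; [apply IHl|apply Rmax_r]. Qed.

Lemma fmax_le : forall l b, (forall a, In a l -> a <= b) -> 0 <= b -> fold_right Rmax 0 l <= b.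
Proof. induction l; simpl; intros; auto. apply Rmax_lub; auto. Qed.

Lemma fmax_lt : forall l b, (forall a, In a l -> a < b) -> 0 < b -> fold_right Rmax 0 l < b.
Proof. induction l; simpl; intros; auto. apply Rmax_lub_lt; auto. Qed.

Lemma sum_nonneg {A} (f : A -> R) : forall l, (forall i, In i l -> 0 <= f i) ->
  0 <= fold_right Rplus 0 (map f l).
Proof. induction l; simpl; intros; [lra|]. pose proof (H a (or_introl eq_refl)).
  pose proof (IHl (fun i Hi => H i (or_intror Hi))). lra. Qed.

Lemma sum_le3 {A} (f g h : A -> R) : forall l, (forall i, In i l -> f i <= g i + h i) ->
  fold_right Rplus 0 (map f l) <= fold_right Rplus 0 (map g l) + fold_right Rplus 0 (map h l).
Proof. induction l; simpl; intros; [lra|]. pose proof (H a (or_introl eq_refl)).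
  pose proof (IHl (fun i Hi => H i (or_intror Hi))). lra. Qed.

Lemma sum_le_len {A} (f : A -> R) b : forall l, (forall i, In i l -> f i < b) ->
  fold_right Rplus 0 (map f l) <= INR (length l) * b.
Proof. induction l; cbn [length fold_right map]; intros; [simpl; lra|]. pose proof (H a (or_introl eq_refl)).
  pose proof (IHl (fun i Hi => H i (or_intror Hi))). rewrite S_INR. lra. Qed.

Lemma sum_lt_len {A} (f : A -> R) b : forall a l, (forall i, In i (a::l) -> f i < b) ->
  fold_right Rplus 0 (map f (a::l)) < INR (length (a::l)) * b.
Proof. intros a l H. cbn [length fold_right map]. pose proof (H a (or_introl eq_refl)).
  pose proof (sum_le_len f b l (fun i Hi => H i (or_intror Hi))). rewrite S_INR. lra. Qed.

Lemma list_delta {A} (l : list A) (P : A -> R -> Prop) :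
  (forall a d d', 0 < d' -> d' <= d -> P a d -> P a d') ->
  (forall a, In a l -> exists d, 0 < d /\ P a d) ->
  exists d, 0 < d /\ forall a, In a l -> P a d.
Proof.
  intros Hm. induction l; intros H.
  - exists 1; split; [lra|]; intros a []. 
  - destruct (H a (or_introl eq_refl)) as [d1 [Hd1 P1]].
    destruct IHl as [d2 [Hd2 P2]]; [intros; apply H; right; auto|].
    exists (Rmin d1 d2); split; [apply Rmin_glb_lt; auto|].
    intros b [<-|Hb].
    + eapply Hm; [apply Rmin_glb_lt; auto| apply Rmin_l | auto].
    + eapply Hm; [apply Rmin_glb_lt; auto| apply Rmin_r | auto].
Qed.

Fixpoint sepl {A B} (R : A -> B -> Prop) (L : list A) : Prop :=
  match L with [] => True
  | a :: L' => (forall a' b, In a' L' -> R a b -> R a' b -> False) /\ sepl R L' end.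

Lemma pigeon {A B} (R : A -> B -> Prop) (F : list B) (L : list A) :
  (forall a, In a L -> exists b, In b F /\ R a b) -> sepl R L -> (length L <= length F)%nat.
Proof.
  intros H1 H2.
  assert (exists M, length M = length L /\ incl M F /\ NoDup M /\
            (forall b, In b M -> exists a, In a L /\ R a b)) as [M [HM1 [HM2 [HM3 _]]]].
  { induction L as [|a L IH].
    - exists []. repeat split; auto. intros b []. constructor. intros b [].
    - destruct H2 as [Hs H2].
      destruct IH as [M' [E1 [E2 [E3 E4]]]]; auto. intros; apply H1; right; auto.
      destruct (H1 a (or_introl eq_refl)) as [b [Hb Rb]].
      exists (b :: M'). repeat split.
      + simpl; lia.
      + intros c [<-|Hc]; auto.
      + constructor; auto. intro Hin. destruct (E4 b Hin) as [a' [Ha' Ra']].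
        eapply Hs; eauto.
      + intros c [<-|Hc]. exists a; split; auto; left; auto.
        destruct (E4 c Hc) as [a' [? ?]]; exists a'; split; auto; right; auto. }
  rewrite <- HM1. apply NoDup_incl_length; auto.
Qed.

Lemma nat_min (P : nat -> Prop) n0 : P n0 -> exists n, P n /\ forall k, P k -> (n <= k)%nat.
Proof.
  induction n0 as [n0 IH] using (well_founded_induction Wf_nat.lt_wf). intros Hp.
  destruct (classic (exists k, (k < n0)%nat /\ P k)) as [[k [Hk Pk]]|Hn].
  - apply (IH k); auto.
  - exists n0; split; auto. intros k Pk. destruct (Compare_dec.le_lt_dec n0 k); auto.
    exfalso; apply Hn; eauto.
Qed.

Section S.
Context {X : Type} (m : metric X) (T : X -> X).

Lemma ball_open c r : Defs.open_set m (fun y => Defs.dist m c y < r).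
Proof.
  intros y Hy. exists (r - Defs.dist m c y); split; [lra|].
  intros w Hw. pose proof (Defs.dist_tri _ m c y w). lra.
Qed.

Lemma dbar_sym k x y : dbar m T k x y = dbar m T k y x.
Proof. unfold dbar. f_equal. f_equal. apply map_ext. intros; apply Defs.dist_sym. Qed.

Lemma dhat_sym n x y : dhat m T n x y = dhat m T n y x.
Proof. unfold dhat. f_equal. apply map_ext. intros; apply dbar_sym. Qed.

Lemma dhat_nonneg n x y : 0 <= dhat m T n x y.
Proof. apply fmax_nonneg. Qed.

Lemma inv_INR_nonneg k : 0 <= / INR k.
Proof. destruct k. simpl; rewrite Rinv_0; lra. left; apply Rinv_0_lt_compat, lt_0_INR; lia. Qed.

Lemma dbar_tri k x y z : dbar m T k x z <= dbar m T k x y + dbar m T k y z.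
Proof.
  unfold dbar. rewrite <- Rmult_plus_distr_l. apply Rmult_le_compat_l; [apply inv_INR_nonneg|].
  apply sum_le3. intros; apply Defs.dist_tri.
Qed.

Lemma dhat_tri n x y z : dhat m T n x z <= dhat m T n x y + dhat m T n y z.
Proof.
  unfold dhat at 1. apply fmax_le.
  - intros a Ha. apply in_map_iff in Ha as [k [<- Hk]].
    eapply Rle_trans; [apply (dbar_tri k x y z)|].
    apply Rplus_le_compat; apply fmax_ge.
    + apply (in_map (fun k => dbar m T k x y)); auto.
    + apply (in_map (fun k => dbar m T k y z)); auto.
  - pose proof (dhat_nonneg n x y); pose proof (dhat_nonneg n y z); lra.
Qed.

Lemma dhat_mono n N x y : (n <= N)%nat -> dhat m T n x y <= dhat m T N x y.
Proof.
  intros HnN. unfold dhat at 1. apply fmax_le; [|apply dhat_nonneg].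
  intros a Ha. apply in_map_iff in Ha as [k [<- Hk]]. apply fmax_ge, (in_map (fun k => dbar m T k x y)).
  apply in_seq in Hk; apply in_seq; lia.
Qed.

Lemma dhat_lt n x y eta : 0 < eta ->
  (forall i, (i < n)%nat -> Defs.dist m (iterT T i x) (iterT T i y) < eta) -> dhat m T n x y < eta.
Proof.
  intros He H. apply fmax_lt; auto. intros a Ha.
  apply in_map_iff in Ha as [k [<- Hk]]. apply in_seq in Hk.
  destruct k as [|k]; [lia|]. unfold dbar.
  pose proof (sum_lt_len (fun i => Defs.dist m (iterT T i x) (iterT T i y)) eta 0%nat (seq 1 k)) as Hs.
  change (0%nat :: seq 1 k) with (seq 0 (S k)) in Hs. rewrite length_seq in Hs.
  assert (Hs' : fold_right Rplus 0 (map (fun i => Defs.dist m (iterT T i x) (iterT T i y)) (seq 0 (S k)))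
    < INR (S k) * eta). { apply Hs. intros i Hi; apply H. apply in_seq in Hi; lia. }
  assert (0 < INR (S k)) by (apply lt_0_INR; lia).
  apply Rmult_lt_reg_l with (INR (S k)); auto.
  rewrite <- Rmult_assoc, Rinv_r by lra. lra.
Qed.

Lemma iter_cont : continuous_map m T -> forall i z eta, 0 < eta -> exists d, 0 < d /\
  forall x, Defs.dist m z x < d -> Defs.dist m (iterT T i z) (iterT T i x) < eta.
Proof.
  intros HT. induction i; intros z eta He.
  - exists eta; split; auto.
  - destruct (HT (iterT T i z) eta He) as [d1 [Hd1 H1]].
    destruct (IHi z d1 Hd1) as [d [Hd H]]. exists d; split; auto.
    intros x Hx. unfold iterT; simpl. apply H1. apply H; auto.
Qed.

Lemma dhat_cont : continuous_map m T -> forall n z eta, 0 < eta -> exists d, 0 < d /\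
  forall x, Defs.dist m z x < d -> dhat m T n z x < eta.
Proof.
  intros HT n z eta He.
  destruct (list_delta (seq 0 n) (fun i d => forall x, Defs.dist m z x < d ->
     Defs.dist m (iterT T i z) (iterT T i x) < eta)) as [d [Hd H]].
  - intros a d d' _ Hle Hp x Hx; apply Hp; lra.
  - intros; apply iter_cont; auto.
  - exists d; split; auto. intros x Hx. apply dhat_lt; auto.
    intros i Hi. apply H; auto. apply in_seq; lia.
Qed.

End S.

Fixpoint good {X : Type} (dh : nat -> X -> X -> R) (K : X -> Prop) (z : X) (e : R)
  (L : list (X * nat)) : Prop :=
  match L with [] => True
  | p :: L' => K (fst p) /\ e <= dh (snd p) z (fst p) /\
      (forall q, In q L' -> dh (snd q) z (fst p) < e / 2) /\ good dh K z e L' end.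

Lemma good_in {X} dh K z e : forall (L : list (X * nat)), good dh K z e L ->
  forall q, In q L -> K (fst q) /\ e <= dh (snd q) z (fst q).
Proof.
  induction L; simpl; intros H q Hq; [contradiction|].
  destruct H as [H1 [H2 [_ H4]]]. destruct Hq as [<-|Hq]; auto.
Qed.

Lemma max_in {A} (f : A -> nat) : forall L q, In q L -> (f q <= fold_right max 0 (map f L))%nat.
Proof. induction L; simpl; intros q Hq; [contradiction|]. destruct Hq as [<-|Hq]; [lia|].
  specialize (IHL q Hq); lia. Qed.

Theorem mainTheorem3 (X : Type) (m : metric X) (T : X -> X)
  (HX : compact_space m) (HT : continuous_map m T)
  (K : X -> Prop) (HK : compact_set m K) :
  bounded_complexity m T K <-> equicontinuous_in_mean m T K.
Proof.
  split.
  - intros BC eps Heps.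
    apply NNPP; intro Hneg.
    assert (Hbad : forall delta, 0 < delta -> exists n x y, (1 <= n)%nat /\ K x /\ K y /\
              Defs.dist m x y < delta /\ eps <= dhat m T n x y).
    { intros delta Hd. apply NNPP; intro H. apply Hneg. exists delta; split; auto.
      intros n x y Hn Kx Ky Hxy. apply Rnot_le_lt. intro Hle. apply H. exists n, x, y. auto. }
    set (e := eps / 4).
    assert (He : 0 < e) by (unfold e; lra).
    destruct (classic (exists z, K z /\ forall delta, 0 < delta -> exists x n, K x /\
                 Defs.dist m z x < delta /\ e <= dhat m T n z x)) as [[z [Kz Hz]] | Hno].
    + destruct (BC (e / 4)) as [C [HC0 HC]]; [lra|].
      assert (Hbuild : forall k, exists L, length L = k /\ good (dhat m T) K z e L).
      { induction k as [|k [L [HL HgL]]]. exists []; split; simpl; auto.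
        destruct (list_delta L (fun q d => forall x, Defs.dist m z x < d ->
             dhat m T (snd q) z x < e / 2)) as [d [Hd Hdq]].
        - intros a d d' _ Hle Hp x Hx; apply Hp; lra.
        - intros q _. apply dhat_cont; auto; lra.
        - destruct (Hz d Hd) as [x [n [Kx [Hx Hn]]]].
          exists ((x, n) :: L); split; simpl; [lia|]. repeat split; auto; intros q Hq; apply Hdq; auto. }
      destruct (Hbuild (S C)) as [L [HL HgL]].
      set (N := S (fold_right max 0%nat (map (@snd X nat) L))).
      assert (HN : forall q, In q L -> (snd q <= N)%nat).
      { intros q Hq. pose proof (max_in (@snd X nat) L q Hq). unfold N; lia. }
      destruct (HC N ltac:(unfold N; lia)) as [s [[[F [HF HFl]] _] HsC]].
      destruct HF as [_ [_ HFc]].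
      set (Rel := fun (a : X * nat) c => In c F /\ dhat m T N c (fst a) < e / 4).
      assert (Hsep : forall L', good (dhat m T) K z e L' -> (forall q, In q L' -> (snd q <= N)%nat) ->
                 sepl Rel L').
      { induction L' as [|p L' IH]; simpl; auto. intros [Kp [Hp [Hq Hg]]] HNq.
        split; [|apply IH; auto].
        intros q c Hin [_ R1] [_ R2].
        destruct (good_in _ _ _ _ L' Hg q Hin) as [_ Hqz].
        specialize (Hq q Hin).
        pose proof (dhat_tri m T N (fst q) c (fst p)) as T1.
        rewrite (dhat_sym m T N (fst q) c) in T1.
        pose proof (dhat_mono m T (snd q) N (fst q) (fst p) (HNq q (or_intror Hin))).
        pose proof (dhat_tri m T (snd q) z (fst p) (fst q)).
        rewrite (dhat_sym m T (snd q) (fst p) (fst q)) in H0. lra. }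
      pose proof (pigeon Rel F L) as Hp.
      assert (length L <= length F)%nat.
      { apply Hp; [|apply Hsep; auto].
        intros a Ha. destruct (good_in _ _ _ _ L HgL a Ha) as [Ka _].
        destruct (HFc (fst a) Ka) as [c [Hc Hcd]]. exists c; split; auto.
        unfold Rel; split; auto. }
      lia.
    + assert (Hno' : forall z, K z -> exists delta, 0 < delta /\ forall x n, K x ->
                Defs.dist m z x < delta -> dhat m T n z x < e).
      { intros z Kz. apply NNPP; intro H. apply Hno. exists z; split; auto.
        intros delta Hd. apply NNPP; intro H2. apply H. exists delta; split; auto.
        intros x n Kx Hx. apply Rnot_le_lt; intro Hle. apply H2. exists x, n; auto. }
      set (I := {p : X * R | K (fst p) /\ 0 < snd p /\ forall x n, K x ->
                 Defs.dist m (fst p) x < snd p -> dhat m T n (fst p) x < e}).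
      destruct (HK I (fun p y => Defs.dist m (fst (proj1_sig p)) y < snd (proj1_sig p) / 2))
        as [l Hl].
      * intros p. apply ball_open.
      * intros x Kx. destruct (Hno' x Kx) as [d [Hd Hdx]].
        exists (exist _ (x, d) (conj Kx (conj Hd Hdx))). simpl.
        rewrite Defs.dist_refl. lra.
      * destruct (list_delta l (fun p d => d <= snd (proj1_sig p) / 2)) as [d0 [Hd0 Hdl]].
        { intros; lra. }
        { intros p _. destruct p as [[c r] [Kc [Hr Hc]]]. simpl in *. exists (r/2); split; lra. }
        destruct (Hbad d0 Hd0) as [n [x [y [Hn [Kx [Ky [Hxy Hbig]]]]]]].
        destruct (Hl x Kx) as [p [Hpl Hpx]].
        specialize (Hdl p Hpl).
        destruct p as [[c r] [Kc [Hr Hc]]]. simpl in *.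
        pose proof (Defs.dist_tri _ m c x y).
        pose proof (Hc x n Kx ltac:(lra)).
        pose proof (Hc y n Ky ltac:(lra)).
        pose proof (dhat_tri m T n x c y). rewrite (dhat_sym m T n x c) in H2.
        unfold e in *; lra.
  - intros EM eps Heps. destruct (EM eps Heps) as [delta [Hd Hdel]].
    destruct (HK {x | K x} (fun i y => Defs.dist m (proj1_sig i) y < delta)) as [l Hl].
    + intros i; apply ball_open.
    + intros x Kx. exists (exist _ x Kx). simpl. rewrite Defs.dist_refl. lra.
    + set (deq := fun x y : X => excluded_middle_informative (x = y)).
      set (F := nodup deq (map (@proj1_sig X K) l)).
      exists (S (length F)); split; [lia|].
      intros n Hn.
      assert (HF : hat_spanning m T K n eps F).
      { split; [apply NoDup_nodup|split].
        - intros x Hx. unfold F in Hx. apply nodup_In, in_map_iff in Hx as [i [<- _]].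
          apply proj2_sig.
        - intros y Ky. destruct (Hl y Ky) as [i [Hi Hiy]]. exists (proj1_sig i); split.
          + unfold F. apply nodup_In, in_map; auto.
          + apply Hdel; auto. apply proj2_sig. }
      destruct (nat_min (fun s => exists F', hat_spanning m T K n eps F' /\ length F' = s)
                  (length F) (ex_intro _ F (conj HF eq_refl))) as [s [Hs Hmin]].
      exists s; split.
      * split; auto. intros F' HF'. apply Hmin. eauto.
      * specialize (Hmin (length F) (ex_intro _ F (conj HF eq_refl))). lia.
Qed.
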